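(* Let $\mathcal H$ be a well-structured preconditioner set. The map $X\mapsto\operatorname{Tr}[P_{\mathcal H}(X)]$ is concave on $\mathcal S^d_{++}$.
   Context: $\mathcal S^d_+$ (resp. $\mathcal S^d_{++}$) denotes the set of real symmetric positive semidefinite (resp. positive definite) $d\times d$ matrices; $\langle A,B\rangle=\operatorname{Tr}(A^\top B)$. A set $\mathcal H\subseteq\mathcal S_+^d$ is a well-structured preconditioner set if $\mathcal H=\mathcal S_+^d\cap\mathcal K$ for some set $\mathcal K$ of real $d\times d$ matrices that is closed under scalar multiplication, matrix addition and matrix multiplication and contains the identity $I_d$. For $M\in\mathcal S^d_{++}$, $P_{\mathcal H}(M):=\arg\min_{H\in\mathcal H\cap\mathcal S^d_{++}}\langle M,H^{-1}\rangle+\operatorname{Tr}(H)$ (the minimizer exists and is unique). *)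

(* Defs.v *)
From mathcomp Require Import all_boot all_order all_algebra.
From mathcomp Require Import boolp classical_sets reals.
Set Implicit Arguments. Unset Strict Implicit. Unset Printing Implicit Defensive.
Import Order.TTheory GRing.Theory Num.Theory.
Local Open Scope ring_scope.
Local Open Scope classical_set_scope.

Section Defs.
Variables (R : realType) (d : nat).
Notation M := 'M[R]_d.

Definition symmx (A : M) : Prop := A^T = A.
Definition psdmx (A : M) : Prop :=
  symmx A /\ forall x : 'cV[R]_d, 0 <= (x^T *m A *m x) 0 0.
Definition pdmx (A : M) : Prop :=
  symmx A /\ forall x : 'cV[R]_d, x != 0 -> 0 < (x^T *m A *m x) 0 0.

Definition frob (A B : M) : R := \tr (A^T *m B).

Definition well_structured_K (K : set M) : Prop :=
  [/\ forall (a : R) A, K A -> K (a *: A),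
      forall A B, K A -> K B -> K (A + B),
      forall A B, K A -> K B -> K (A *m B)
    & K 1%:M].

Definition precond_set (K : set M) : set M := [set H | psdmx H /\ K H].

Definition precond_obj (X H : M) : R := frob X (invmx H) + \tr H.

Definition is_precond_min (K : set M) (X H : M) : Prop :=
  [/\ precond_set K H, pdmx H &
      forall H', precond_set K H' -> pdmx H' -> precond_obj X H <= precond_obj X H'].

(* P_H(X) := argmin (chosen by classical choice; the minimizer exists and is unique) *)
Definition P_H (K : set M) (X : M) : M := xget 0 (is_precond_min K X).

End Defs.

(* Main.v *)
Require Import Defs.
From HB Require Import structures.
From mathcomp Require Import all_boot all_order all_algebra.
From mathcomp Require Import boolp classical_sets reals.
From mathcomp Require Import topology normedtype derive.
From mathcomp Require Import ring lra.
Set Implicit Arguments. Unset Strict Implicit. Unset Printing Implicit Defensive.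
Import Order.TTheory GRing.Theory Num.Theory.
Import numFieldTopology.Exports numFieldNormedType.Exports.
Local Open Scope classical_set_scope.
Local Open Scope ring_scope.

Section Alg.
Variable R : realType.

Definition qf n (A : 'M[R]_n) (x : 'cV_n) := (x^T *m A *m x) 0 0.
Definition bl n (A : 'M[R]_n) (x y : 'cV_n) := (x^T *m A *m y) 0 0.

Lemma disc (a b c : R) : 0 <= a ->
  (forall t, 0 <= a * t ^+ 2 + 2 * b * t + c) -> b ^+ 2 <= a * c.
Proof.
move=> a0 H; have [a0'|] := ltrP 0 a.
  have h := H (- b / a).
  have e : a * (- b / a) ^+ 2 + 2 * b * (- b / a) + c = c - b ^+ 2 / a.
    by field; rewrite gt_eqF.
  rewrite e in h.
  have e2 : a * c - b ^+ 2 = a * (c - b ^+ 2 / a).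
    by field; rewrite gt_eqF.
  rewrite -subr_ge0 e2; apply: mulr_ge0 => //; exact: ltW.
move=> a0''; have ae : a = 0 by apply/eqP; rewrite eq_le a0'' a0.
rewrite ae mul0r; have [->|bn] := eqVneq b 0; first by rewrite expr0n.
have := H (- (c + 1) / (2 * b)); rewrite ae mul0r add0r.
have -> : 2 * b * (- (c + 1) / (2 * b)) + c = -1.
  by field; rewrite ?mulf_neq0 ?pnatr_eq0 ?bn //=.
by rewrite oppr_ge0 ler10.
Qed.

Lemma mx11_tr (M : 'M[R]_1) : M^T 0 0 = M 0 0.
Proof. by rewrite mxE. Qed.

Lemma bl_sym n (A : 'M[R]_n) x y : A^T = A -> bl A x y = bl A y x.
Proof.
move=> hA; rewrite /bl -mx11_tr !trmx_mul trmxK hA mulmxA //.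
Qed.

Lemma qfD n (A : 'M[R]_n) x y t : A^T = A ->
  qf A (x + t *: y) = qf A x + 2 * t * bl A x y + t ^+ 2 * qf A y.
Proof.
move=> hA; have e := bl_sym x y hA; rewrite /qf /bl in e *.
have -> : (x + t *: y)^T = x^T + t *: y^T.
  by apply/matrixP => i j; rewrite !mxE.
rewrite !mulmxDl !mulmxDr -!scalemxAl -!scalemxAr.
move: e; set a := x^T *m A *m x; set b := x^T *m A *m y; set b' := y^T *m A *m x;
  set c := y^T *m A *m y => e; clearbody a b b' c.
rewrite !mxE e; ring.
Qed.

Lemma qfB n (a : R) (r : 'M[R]_(1, n)) (D : 'M[R]_n) (t : R) (y : 'cV[R]_n) :
  qf (block_mx a%:M r r^T D) (col_mx t%:M y) =
  t ^+ 2 * a + 2 * t * (r *m y) 0 0 + qf D y.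
Proof.
rewrite /qf tr_col_mx tr_scalar_mx mul_row_block mul_row_col.
rewrite !mulmxDl -trmx_mul -scalar_mxM !mul_mx_scalar !mul_scalar_mx -scalemxAl.
set u := y^T *m D *m y; set w := r *m y; clearbody u w.
rewrite !mxE eqxx /= mulr1n; ring.
Qed.

Lemma CS n (A : 'M[R]_n) x y : psdmx A -> bl A x y ^+ 2 <= qf A x * qf A y.
Proof.
case=> sA pA; rewrite mulrC; apply: disc; first exact: pA.
move=> t; have := pA (x + t *: y); rewrite -/(qf _ _) qfD //.
by rewrite /qf; move=> h; rewrite (le_trans h) // le_eqVlt; apply/orP; left; apply/eqP; ring.
Qed.


Lemma mx11_trmul (u : 'M[R]_1) : (u^T *m u) 0 0 = u 0 0 ^+ 2.
Proof. by rewrite mxE big_ord1 mxE expr2. Qed.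

Lemma gram n (A : 'M[R]_n) : psdmx A -> exists m (M : 'M[R]_(m, n)), A = M^T *m M.
Proof.
elim: n A => [|n IH] A [sA pA].
  by exists 0%N, 0; apply/matrixP => -[].
change (exists m (M : 'M[R]_(m, 1 + n)), (A : 'M_(1 + n)) = M^T *m M).
have eA : A = block_mx (A 0 0)%:M (ursubmx (A : 'M_(1 + n))) (ursubmx (A : 'M_(1 + n)))^T
                 (drsubmx (A : 'M_(1 + n))).
  have e1 : ulsubmx (A : 'M_(1 + n)) = (A 0 0)%:M.
    rewrite [LHS]mx11_scalar mxE.
    by rewrite mxE; congr (_%:M); congr (A _ _); apply/val_inj.
  have e2 : dlsubmx (A : 'M_(1 + n)) = (ursubmx (A : 'M_(1 + n)))^T.
    by rewrite trmx_ursub sA.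
  by rewrite -e1 -e2 submxK.
move: eA; set a : R := A 0 0; set r := ursubmx _; set D := drsubmx _.
clearbody a r D => eA; rewrite {}eA in sA pA *.
have qA t y : 0 <= t ^+ 2 * a + 2 * t * (r *m y) 0 0 + qf D y.
  by rewrite -qfB; apply: pA.
have a0 : 0 <= a by have := qA 1 0; rewrite mulmx0 mxE /qf !mulmx0 mxE; lra.
have sD : D^T = D.
  move: sA; rewrite /symmx => h.
  have := congr1 (fun M : 'M_(1+n) => drsubmx M) h.
  by rewrite /= -trmx_drsub !block_mxKdr.
have [a_gt0|] := ltrP 0 a; last first.
  move=> ale; have ae : a = 0 by apply/eqP; rewrite eq_le ale a0.
  have ry (y : 'cV_n) : (r *m y) 0 0 = 0.
    have h : ((r *m y) 0 0) ^+ 2 <= 0 * qf D y.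
      apply: (@disc 0 ((r *m y) 0 0) (qf D y)) => // t; have := qA t y.
      by rewrite ae !mul0r mulr0 !add0r (mulrAC 2 ((r *m y) 0 0) t).
    by apply/eqP; rewrite -sqrf_eq0 eq_le sqr_ge0 andbT -(mul0r (qf D y)).
  have r0 : r = 0.
    apply/matrixP => i j; rewrite (ord1 i) mxE.
    by have := ry (delta_mx j 0); rewrite -colE mxE.
  have [m [N eN]] : exists m (N : 'M[R]_(m, n)), D = N^T *m N.
    apply: IH; split => // y; have := qA 0 y.
    by rewrite expr0n /= !mul0r mulr0 !mul0r !add0r.
  exists m, (row_mx (0 : 'M_(m, 1)) N); rewrite tr_row_mx mul_col_row -eN ae r0 trmx0 linear0.
  by rewrite !mulmx0 trmx0 mul0mx; congr block_mx; apply/matrixP => i j; rewrite !mxE mul0rn.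
pose S := D - a^-1 *: (r^T *m r).
have [m [N eN]] : exists m (N : 'M[R]_(m, n)), S = N^T *m N.
  apply: IH; split.
    by rewrite /symmx /S linearB /= linearZ /= trmx_mul trmxK sD.
  move=> y; rewrite -/(qf _ _).
  have -> : qf S y = qf D y - a^-1 * ((r *m y) 0 0) ^+ 2.
    rewrite /qf /S mulmxBr mulmxBl -scalemxAr -scalemxAl.
    have -> : y^T *m (r^T *m r) *m y = (r *m y)^T *m (r *m y).
      by rewrite trmx_mul !mulmxA.
    rewrite -mx11_trmul; set P := y^T *m D *m y; set Q := _ *m (r *m y).
    by clearbody P Q; rewrite !mxE.
  have := qA (- (r *m y) 0 0 / a) y; set b := (r *m y) 0 0.
  have -> : (- b / a) ^+ 2 * a + 2 * (- b / a) * b = - (a^-1 * b ^+ 2).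
    by field; rewrite gt_eqF.
  lra.
pose s := Num.sqrt a.
have s2 : s ^+ 2 = a by rewrite sqr_sqrtr.
have s0 : s != 0 by rewrite sqrtr_eq0 -ltNge.
exists (1 + m)%N, (col_mx (row_mx s%:M (s^-1 *: r)) (row_mx 0 N)).
rewrite tr_col_mx mul_row_col !tr_row_mx !mul_col_row -eN.
rewrite add_block_mx tr_scalar_mx linearZ /= trmx0 !mulmx0 mul0mx.
congr block_mx.
- by rewrite addr0 -scalar_mxM -expr2 s2.
- by rewrite addr0 mul_scalar_mx scalerA mulVf // scale1r.
- by rewrite addr0 mul_mx_scalar linearZ /= scalerA divff // scale1r.
- have -> : (s^-1 *: r)^T = s^-1 *: r^T by apply/matrixP => i j; rewrite !mxE.
  rewrite -scalemxAl -scalemxAr scalerA -expr2 exprVn s2 /S.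
  by rewrite addrC subrK.
Qed.

Lemma qf1 n (x : 'cV[R]_n) : qf 1%:M x = \sum_i x i 0 ^+ 2.
Proof. by rewrite /qf mulmx1 mxE; apply: eq_bigr => i _; rewrite mxE expr2. Qed.

Lemma psd1 n : psdmx (1%:M : 'M[R]_n).
Proof.
split; first exact: trmx1.
by move=> x; rewrite -/(qf _ _) qf1 sumr_ge0 // => i _; rewrite sqr_ge0.
Qed.

Lemma bl1 n (x y : 'cV[R]_n) : bl 1%:M x y = \sum_i x i 0 * y i 0.
Proof. by rewrite /bl mulmx1 mxE; apply: eq_bigr => i _; rewrite mxE. Qed.

Lemma CSsum n (u v : 'I_n -> R) :
  (\sum_i u i * v i) ^+ 2 <= (\sum_i u i ^+ 2) * (\sum_i v i ^+ 2).
Proof.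
have := CS (\col_i u i) (\col_i v i) (@psd1 n).
rewrite bl1 !qf1.
have e (w : 'I_n -> R) : \sum_i (\col_i w i) i 0 ^+ 2 = \sum_i w i ^+ 2.
  by apply: eq_bigr => i _; rewrite mxE.
rewrite !e (eq_bigr (fun i => u i * v i)) //.
by move=> i _; rewrite !mxE.
Qed.

Lemma qf_gram m n (M : 'M[R]_(m, n)) x : qf (M^T *m M) x = \sum_k (M *m x) k 0 ^+ 2.
Proof.
rewrite /qf mulmxA -trmx_mul -mulmxA; set y := M *m x; clearbody y.
by rewrite mxE; apply: eq_bigr => k _; rewrite mxE expr2.
Qed.

Lemma tr_gram m n (M : 'M[R]_(m, n)) : \tr (M^T *m M) = \sum_k \sum_j M k j ^+ 2.
Proof.
rewrite mxtrace_mulC /mxtrace; apply: eq_bigr => k _; rewrite mxE.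
by apply: eq_bigr => j _; rewrite mxE expr2.
Qed.

Lemma tr_gram_ge0 m n (M : 'M[R]_(m, n)) : 0 <= \tr (M^T *m M).
Proof. by rewrite tr_gram sumr_ge0 // => k _; rewrite sumr_ge0 // => j _; rewrite sqr_ge0. Qed.

Lemma qf_gram_le m n (M : 'M[R]_(m, n)) x : qf (M^T *m M) x <= \tr (M^T *m M) * qf 1%:M x.
Proof.
rewrite qf_gram tr_gram qf1 mulr_suml; apply: ler_sum => k _.
have -> : (M *m x) k 0 = \sum_j M k j * x j 0 by rewrite mxE.
exact: CSsum.
Qed.

Lemma tr_psd_gram n m (X : 'M[R]_n) (M : 'M[R]_(m, n)) : psdmx X ->
  0 <= \tr (X *m (M^T *m M)).
Proof.
case=> _ pX; rewrite mulmxA mxtrace_mulC mulmxA /mxtrace sumr_ge0 // => k _.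
have := pX (row k M)^T; rewrite trmxK.
set L := _ 0 0; set Rr := _ k k; suff -> : Rr = L by [].
rewrite /L /Rr !mxE; apply: eq_bigr => j _; rewrite !mxE; congr (_ * _).
by apply: eq_bigr => i _; rewrite !mxE.
Qed.

Lemma pd_psd n (A : 'M[R]_n) : pdmx A -> psdmx A.
Proof.
case=> sA pA; split => // x; have [->|xn] := eqVneq x 0.
  by rewrite mulmx0 mxE.
exact/ltW/pA.
Qed.

Lemma pd_unit n (X : 'M[R]_n) : pdmx X -> X \in unitmx.
Proof.
case=> sX pX; rewrite -row_free_unit -kermx_eq0; apply/negPn/negP => hK.
have [i hi] : exists i, row i (kermx X) != 0.
  apply/existsP; move: hK; apply: contraR; rewrite negb_exists => /forallP h.
  apply/eqP/row_matrixP => i; rewrite row0; exact/eqP/negPn/h.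
set v := row i (kermx X) in hi.
have vX : v *m X = 0 by rewrite /v -row_mul mulmx_ker row0.
have := pX v^T; rewrite trmx_eq0 hi trmxK vX mul0mx mxE => /(_ isT).
by rewrite ltxx.
Qed.

Lemma qfE n (A : 'M[R]_n) x : qf A x = (x^T *m A *m x) 0 0.
Proof. by []. Qed.

Lemma pd_inv n (H : 'M[R]_n) : pdmx H -> pdmx (invmx H).
Proof.
move=> pH; have uH := pd_unit pH; case: pH => sH pH.
have sG : (invmx H)^T = invmx H by rewrite trmx_inv sH.
split => // x xn.
have e : x^T *m invmx H *m x = (invmx H *m x)^T *m H *m (invmx H *m x).
  by rewrite trmx_mul sG -!mulmxA (mulmxA H) mulmxV // mul1mx.
rewrite e; apply: pH; apply: contra xn => /eqP h.
by rewrite -(mulKVmx uH x) h mulmx0.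
Qed.

Lemma CS_inv n (H : 'M[R]_n) x : pdmx H ->
  qf 1%:M x ^+ 2 <= qf (invmx H) x * qf H x.
Proof.
move=> pH; have uH := pd_unit pH; have sH := pH.1.
have := CS x (H *m x) (pd_psd (pd_inv pH)).
have -> : bl (invmx H) x (H *m x) = qf 1%:M x.
  by rewrite /bl /qf mulmx1 -mulmxA (mulmxA (invmx H)) mulVmx // mul1mx.
suff -> : qf (invmx H) (H *m x) = qf H x by [].
by rewrite /qf trmx_mul sH -!mulmxA (mulmxA (invmx H)) mulVmx // mul1mx.
Qed.

Lemma bl_delta n (A : 'M[R]_n) i j : bl A (delta_mx i 0) (delta_mx j 0) = A i j.
Proof. by rewrite /bl trmx_delta -rowE -colE !mxE. Qed.

Lemma psd_diag n (A : 'M[R]_n) i : psdmx A -> 0 <= A i i.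
Proof. by case=> _ pA; have := pA (delta_mx i 0); rewrite -(bl_delta A i i). Qed.

Lemma psd_diag_le n (A : 'M[R]_n) i : psdmx A -> A i i <= \tr A.
Proof.
move=> pA; rewrite /mxtrace (bigD1 i) //= lerDl sumr_ge0 // => k _.
exact: psd_diag.
Qed.

Lemma psd_entry n (A : 'M[R]_n) i j : psdmx A -> `|A i j| <= \tr A.
Proof.
move=> pA; have := CS (delta_mx i 0) (delta_mx j 0) pA.
have q (k : 'I_n) : qf A (delta_mx k 0) = A k k := bl_delta A k k.
rewrite !q bl_delta => h.
have t0 : 0 <= \tr A by apply: le_trans (psd_diag_le i pA); exact: psd_diag.
rewrite -(ger0_norm t0) -ler_sqr ?nnegrE //.
apply: (le_trans (y := A i j ^+ 2)); first by rewrite real_normK ?num_real.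
apply: (le_trans h); rewrite expr2 ger0_norm // ler_pM ?psd_diag ?psd_diag_le //.
Qed.

Lemma balance (a b : R) : 0 <= a -> 0 <= b ->
  (forall c, 0 < c -> a + b <= c^-1 * a + c * b) -> a = b.
Proof.
move=> a0 b0 H; have [b_gt0|] := ltrP 0 b; last first.
  move=> bl0; have be : b = 0 by apply/eqP; rewrite eq_le bl0 b0.
  have := H 2 (ltr0n _ 2); rewrite be !mulr0 !addr0 => h.
  have : a <= a / 2 by rewrite mulrC.
  move=> h2; nra.
have ab0 : 0 < a + b by lra.
have c0 : 0 < (a + b) / (2 * b) by rewrite divr_gt0 // ?mulr_gt0 //; lra.
have := H _ c0; rewrite invf_div.
have -> : 2 * b / (a + b) * a + (a + b) / (2 * b) * b = 2 * a * b / (a + b) + (a + b) / 2.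
  by field; apply/andP; split; rewrite ?gt_eqF //; lra.
move=> h.
have : (a + b) * (a + b) <= (2 * a * b / (a + b) + (a + b) / 2) * (a + b).
  by rewrite ler_pM2r.
have e3 : (2 * a * b / (a + b) + (a + b) / 2) * (a + b) = 2 * a * b + (a + b) ^+ 2 / 2.
  by field; rewrite gt_eqF.
rewrite e3 => h2.
have : (a - b) ^+ 2 <= 0 by nra.
rewrite le_eqVlt ltNge sqr_ge0 orbF sqrf_eq0 subr_eq0 => /eqP //.
Qed.

Lemma qfZ n (A : 'M[R]_n) c x : qf (c *: A) x = c * qf A x.
Proof. by rewrite /qf -scalemxAr -scalemxAl mxE. Qed.

Lemma qfDM n (A B : 'M[R]_n) x : qf (A + B) x = qf A x + qf B x.
Proof. by rewrite /qf mulmxDr mulmxDl mxE. Qed.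

Lemma trZ n (A : 'M[R]_n) c : (c *: A)^T = c *: A^T.
Proof. by apply/matrixP => i j; rewrite !mxE. Qed.

Lemma trD n (A B : 'M[R]_n) : (A + B)^T = A^T + B^T.
Proof. by apply/matrixP => i j; rewrite !mxE. Qed.

Lemma pd_scale n (H : 'M[R]_n) c : pdmx H -> 0 < c -> pdmx (c *: H).
Proof.
case=> sH pH c0; split; first by rewrite /symmx trZ sH.
by move=> x xn; rewrite -/(qf _ _) qfZ mulr_gt0 //; apply: pH.
Qed.

Lemma pd_comb n (X Y : 'M[R]_n) t : pdmx X -> pdmx Y -> 0 <= t -> t <= 1 ->
  pdmx (t *: X + (1 - t) *: Y).
Proof.
case=> sX pX [sY pY] t0 t1; split.
  by rewrite /symmx trD !trZ sX sY.
move=> x xn; rewrite -/(qf _ _) qfDM !qfZ.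
have := pX x xn; have := pY x xn; rewrite -!/(qf _ _) => hy hx; nra.
Qed.

Lemma frob_ge0 n (X G : 'M[R]_n) : psdmx X -> psdmx G -> 0 <= frob X G.
Proof.
move=> pX /gram [m [M ->]]; rewrite /frob pX.1; exact: tr_psd_gram.
Qed.

Lemma tr_psd_ge0 n (H : 'M[R]_n) : psdmx H -> 0 <= \tr H.
Proof. by move=> /gram [m [M ->]]; exact: tr_gram_ge0. Qed.

Lemma frob_comb n (X Y G : 'M[R]_n) t :
  frob (t *: X + (1 - t) *: Y) G = t * frob X G + (1 - t) * frob Y G.
Proof.
by rewrite /frob trD !trZ mulmxDl -!scalemxAl mxtraceD !mxtraceZ.
Qed.

Section K.
Variables (n : nat) (K : set 'M[R]_n).
Hypothesis wsK : well_structured_K K.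

Lemma feas_scale (H : 'M[R]_n) c : precond_set K H -> pdmx H -> 0 < c ->
  precond_set K (c *: H) /\ pdmx (c *: H).
Proof.
case: wsK => hZ _ _ _ [_ kH] pH c0; have pcH := pd_scale pH c0.
by split => //; split => //; [exact: pd_psd | exact: hZ].
Qed.

Lemma obj_scale (X H : 'M[R]_n) c : H \in unitmx -> 0 < c ->
  precond_obj X (c *: H) = c^-1 * frob X (invmx H) + c * \tr H.
Proof.
move=> uH c0; rewrite /precond_obj invmxZ ?unitmxZ ?unitfE ?gt_eqF //.
by rewrite /frob -scalemxAr !mxtraceZ.
Qed.

Lemma min_bal (X H : 'M[R]_n) : psdmx X -> is_precond_min K X H -> frob X (invmx H) = \tr H.
Proof.
move=> pX [fH pH mH]; have uH := pd_unit pH.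
apply: balance.
- exact/frob_ge0/pd_psd/pd_inv.
- exact/tr_psd_ge0/pd_psd.
move=> c c0; have [f2 p2] := feas_scale fH pH c0.
have := mH _ f2 p2; rewrite obj_scale //.
Qed.

Lemma min_value (X H : 'M[R]_n) : psdmx X -> is_precond_min K X H -> precond_obj X H = 2 * \tr H.
Proof. by move=> pX mH; rewrite /precond_obj (min_bal pX mH) mulr2n mulrDl mul1r. Qed.

End K.

Lemma qf1_gram m n (M : 'M[R]_(m, n)) x : qf (M^T *m M) x = qf 1%:M (M *m x).
Proof. by rewrite qf_gram qf1. Qed.

Lemma qf1_ge0 n (x : 'cV[R]_n) : 0 <= qf 1%:M x.
Proof. exact: (psd1 n).2. Qed.

Lemma eps_pd n (X : 'M[R]_n) : pdmx X ->
  exists2 e, 0 < e & forall x, e * qf 1%:M x <= qf X x.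
Proof.
move=> pX; have uX := pd_unit pX; have [m [M eX]] := gram (pd_psd pX).
pose Nn := invmx X *m M^T.
have NM : Nn *m M = 1%:M by rewrite /Nn -mulmxA -eX mulVmx.
pose T := \tr (Nn^T *m Nn); have T0 : 0 <= T := tr_gram_ge0 Nn.
have iT : 0 < (1 + T)^-1 by rewrite invr_gt0; lra.
have iTe : (1 + T)^-1 * (1 + T) = 1 by rewrite mulVf // gt_eqF //; lra.
exists (1 + T)^-1 => // x.
have h1 : qf 1%:M x = qf (Nn^T *m Nn) (M *m x).
  by rewrite qf1_gram mulmxA NM mul1mx.
have h2 : qf X x = qf 1%:M (M *m x) by rewrite eX qf1_gram.
have := qf_gram_le Nn (M *m x); rewrite -h1 -h2 -/T => h.
have q0 : 0 <= qf X x by rewrite h2 qf1_ge0.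
set a := qf 1%:M x in h *; set b := qf X x in h q0 *; set i := (1 + T)^-1 in iT iTe *.
nra.
Qed.

Lemma coerc n (X H : 'M[R]_n) e C : pdmx X -> 0 < e ->
  (forall x, e * qf 1%:M x <= qf X x) -> pdmx H -> precond_obj X H <= C ->
  [/\ 0 <= C, \tr H <= C, (forall i j, `|H i j| <= C) &
     (forall x, e / (C + 1) * qf 1%:M x <= qf H x)].
Proof.
move=> pX e0 hX pH hC.
have pG := pd_inv pH; have [mG [Mg eG]] := gram (pd_psd pG).
have f0 : 0 <= frob X (invmx H) by apply: frob_ge0; [exact: pd_psd | exact: pd_psd].
have t0 : 0 <= \tr H by apply: tr_psd_ge0; exact: pd_psd.
move: hC; rewrite /precond_obj => hC.
have C0 : 0 <= C by lra.
have tC : \tr H <= C by lra.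
pose Xe := X + (- e) *: 1%:M.
have pXe : psdmx Xe.
  split; first by rewrite /symmx /Xe trD trZ trmx1 pX.1.
  move=> x; rewrite -/(qf _ _) /Xe qfDM qfZ; have := hX x; lra.
have eG' : e * \tr (invmx H) <= frob X (invmx H).
  have := tr_psd_gram Mg pXe; rewrite -eG /Xe mulmxDl -scalemxAl mul1mx mxtraceD mxtraceZ.
  by rewrite /frob pX.1; lra.
have tG0 : 0 <= \tr (invmx H) by rewrite eG; exact: tr_gram_ge0.
split => //.
  by move=> i j; apply: le_trans (psd_entry i j (pd_psd pH)) tC.
move=> x; have hcs := CS_inv x pH.
have hg := qf_gram_le Mg x; rewrite -eG in hg.
have h0 : 0 <= qf H x by exact: (pd_psd pH).2.
have a0 := qf1_ge0 x.
set a := qf 1%:M x in hcs hg a0 *; set h := qf H x in hcs h0 *.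
set g := qf (invmx H) x in hcs hg; set tG := \tr (invmx H) in hg eG' tG0.
have eC : e * tG <= C by lra.
have key : e * a <= C * h.
  have [a_gt0|ale] := ltrP 0 a; last first.
    have ae : a = 0 by apply/eqP; rewrite eq_le ale a0.
    by rewrite ae mulr0 mulr_ge0.
  have : a * a <= a * (tG * h) by nra.
  rewrite ler_pM2l // => ha.
  nra.
have C1 : 0 < C + 1 by lra.
rewrite mulrAC ler_pdivrMr //; nra.
Qed.

End Alg.

Section Cont.
Variables (R : realType) (T : topologicalType) (p : T).

Definition cp (f : T -> R) := {for p, continuous f}.

Lemma cp_cst c : cp (fun=> c).
Proof. exact: cst_continuous. Qed.

Lemma cp_add f g : cp f -> cp g -> cp (fun x => f x + g x).
Proof. exact: continuousD. Qed.

Lemma cp_mul f g : cp f -> cp g -> cp (fun x => f x * g x).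
Proof. exact: continuousM. Qed.

Lemma cp_opp f : cp f -> cp (fun x => - f x).
Proof. exact: continuousN. Qed.

Lemma cp_inv f : f p != 0 -> cp f -> cp (fun x => (f x)^-1).
Proof. exact: continuousV. Qed.

Lemma cp_sum (I : Type) (r : seq I) (P : pred I) (F : I -> T -> R) :
  (forall i, cp (F i)) -> cp (fun x => \sum_(i <- r | P i) F i x).
Proof.
move=> h; elim: r => [|i r IH].
  by under eq_fun do rewrite big_nil; exact: cp_cst.
under eq_fun do rewrite big_cons.
case: (P i) => //; exact: cp_add.
Qed.

Lemma cp_prod (I : Type) (r : seq I) (P : pred I) (F : I -> T -> R) :
  (forall i, cp (F i)) -> cp (fun x => \prod_(i <- r | P i) F i x).
Proof.
move=> h; elim: r => [|i r IH].
  by under eq_fun do rewrite big_nil; exact: cp_cst.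
under eq_fun do rewrite big_cons.
case: (P i) => //; exact: cp_mul.
Qed.

Lemma cp_det k (F : T -> 'M[R]_k) : (forall i j, cp (fun x => F x i j)) ->
  cp (fun x => \det (F x)).
Proof.
move=> h; rewrite /determinant; apply: cp_sum => s.
by apply: cp_mul; [exact: cp_cst | apply: cp_prod => i; exact: h].
Qed.

Lemma cp_adj k (F : T -> 'M[R]_k) : (forall i j, cp (fun x => F x i j)) ->
  forall i j, cp (fun x => \adj (F x) i j).
Proof.
move=> h i j; under eq_fun do rewrite mxE /cofactor.
apply: cp_mul; first exact: cp_cst.
apply: cp_det => a b; under eq_fun do rewrite !mxE; exact: h.
Qed.

Definition cpm m n (F : T -> 'M[R]_(m, n)) := forall i j, cp (fun x => F x i j).

Lemma cpm_cst m n (A : 'M[R]_(m, n)) : cpm (fun=> A).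
Proof. by move=> i j; exact: cp_cst. Qed.

Lemma cpm_mul m n k (F : T -> 'M[R]_(m, n)) (G : T -> 'M[R]_(n, k)) :
  cpm F -> cpm G -> cpm (fun x => F x *m G x).
Proof.
move=> hF hG i j; under eq_fun do rewrite mxE.
by apply: cp_sum => l; apply: cp_mul; [exact: hF | exact: hG].
Qed.

Lemma cpm_add m n (F G : T -> 'M[R]_(m, n)) :
  cpm F -> cpm G -> cpm (fun x => F x + G x).
Proof. by move=> hF hG i j; under eq_fun do rewrite mxE; exact: cp_add. Qed.

Lemma cpm_scale m n (s : T -> R) (F : T -> 'M[R]_(m, n)) :
  cp s -> cpm F -> cpm (fun x => s x *: F x).
Proof. by move=> hs hF i j; under eq_fun do rewrite mxE; exact: cp_mul. Qed.

Lemma cpm_tr n (F : T -> 'M[R]_n) : cpm F -> cp (fun x => \tr (F x)).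
Proof. by move=> hF; apply: cp_sum => i; exact: hF. Qed.

Lemma cpm_adj k (F : T -> 'M[R]_k) : cpm F -> cpm (fun x => \adj (F x)).
Proof. exact: cp_adj. Qed.

End Cont.

Lemma cp_coord (R : realType) N (p : 'rV[R]_N) k : cp p (fun v : 'rV[R]_N => v 0 k).
Proof. exact: coord_continuous. Qed.

Lemma cpm_vec (R : realType) d (p : 'rV[R]_(d * d)) : cpm p (fun v => vec_mx v).
Proof. by move=> i j; under eq_fun do rewrite mxE; exact: cp_coord. Qed.

Lemma closed_le_fun (R : realType) (T : topologicalType) (f g : T -> R) :
  (forall p, cp p f) -> (forall p, cp p g) -> closed [set x | f x <= g x].
Proof.
move=> hf hg.
have cg : continuous (fun x => g x - f x).
  by move=> p; exact: (cp_add (hg p) (cp_opp (hf p))).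
suff -> : [set x | f x <= g x] = (fun x => g x - f x) @^-1` [set y : R | 0 <= y].
  exact: (proj1 (continuous_closedP _) cg _ (@closed_ge R 0)).
by apply/seteqP; split => x /=; rewrite subr_ge0.
Qed.

Section Span.
Variables (R : realType) (d : nat) (K : set 'M[R]_d).
Hypothesis wsK : well_structured_K K.

Let N := (d * d)%N.

Definition goodB (B : 'M[R]_N) := forall w : 'rV_N, K (vec_mx (w *m B)).

Lemma K0 : K 0.
Proof. by case: wsK => hZ _ _ h1; rewrite -(scale0r 1%:M); exact: hZ. Qed.

Lemma K_span : exists B : 'M[R]_N, forall A, K A <-> (mxvec A <= B)%MS.
Proof.
case: wsK => hZ hD _ _.
pose P k := `[< exists B : 'M[R]_N, \rank B = k /\ goodB B >].
have P0 : exists k, P k.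
  exists 0%N; apply/asboolP; exists 0; split; first exact: mxrank0.
  by move=> w; rewrite mulmx0 linear0; exact: K0.
have Pub k : P k -> (k <= N)%N.
  by move=> /asboolP [B [<- _]]; exact: rank_leq_col.
case: (ex_maxnP P0 Pub) => k /asboolP [B [rB gB]] kmax.
exists B => A; split; last first.
  by move=> /submxP [w ew]; have := gB w; rewrite -ew mxvecK.
move=> KA; apply/negPn/negP => nAB.
pose B' := (B + mxvec A)%MS.
have sBB' : (B <= B')%MS := addsmxSl _ _.
have sAB' : (mxvec A <= B')%MS := addsmxSr _ _.
have hlt : (\rank B < \rank B')%N.
  rewrite (ltn_leqif (mxrank_leqif_sup sBB')).
  by apply: contra nAB => sB'B; exact: submx_trans sAB' sB'B.
have gB' : goodB B'.
  move=> w; have : (w *m B' <= col_mx B (mxvec A))%MS.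
    by rewrite -addsmxE submxMl.
  case/submxP => u ->.
  rewrite -[u]hsubmxK mul_row_col linearD /=; apply: hD; first exact: gB.
  rewrite [rsubmx u]mx11_scalar mul_scalar_mx linearZ /= mxvecK; exact: hZ.
have := kmax _ (asboolT (ex_intro _ B' (conj erefl gB'))).
by rewrite -rB leqNgt hlt.
Qed.

End Span.

Lemma qf1_gt0 (R : realType) n (x : 'cV[R]_n) : x != 0 -> 0 < qf 1%:M x.
Proof.
move=> xn; rewrite qf1.
have [i hi] : exists i, x i 0 != 0.
  apply/existsP; move: xn; apply: contraR; rewrite negb_exists => /forallP h.
  apply/eqP/matrixP => i j; rewrite (ord1 j) mxE; exact/eqP/negPn/h.
rewrite (bigD1 i) //=; apply: lt_le_trans (_ : 0 < x i 0 ^+ 2) _.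
  by rewrite lt_def sqr_ge0 andbT sqrf_eq0.
by rewrite lerDl sumr_ge0 // => k _; rewrite sqr_ge0.
Qed.

Lemma closed_eq_fun (R : realType) (T : topologicalType) (f g : T -> R) :
  (forall p, cp p f) -> (forall p, cp p g) -> closed [set x | f x = g x].
Proof.
move=> hf hg.
suff -> : [set x | f x = g x] = [set x | f x <= g x] `&` [set x | g x <= f x].
  by apply: closedI; apply: closed_le_fun.
by apply/seteqP; split => x /=; [move=> -> | case=> h1 h2; apply/eqP; rewrite eq_le h1 h2].
Qed.

Section Exist.
Variables (R : realType) (d : nat) (K : set 'M[R]_d) (X : 'M[R]_d).
Hypothesis wsK : well_structured_K K.
Hypothesis pX : pdmx X.

Let N := (d * d)%N.

Lemma pd1 : pdmx (1%:M : 'M[R]_d).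
Proof. by split; [exact: trmx1 | move=> x xn; rewrite -/(qf _ _); exact: qf1_gt0]. Qed.

Lemma feas1 : precond_set K (1%:M : 'M[R]_d).
Proof. by split; [exact: pd_psd pd1 | case: wsK]. Qed.

Definition hobj (v : 'rV[R]_N) : R :=
  \tr (X^T *m ((\det (vec_mx v))^-1 *: \adj (vec_mx v))) + \tr (vec_mx v).

Lemma hobjE v : vec_mx v \in unitmx -> hobj v = precond_obj X (vec_mx v).
Proof. by move=> u; rewrite /hobj /precond_obj /frob /invmx u. Qed.

Lemma hobj_cont (p : 'rV[R]_N) : vec_mx p \in unitmx -> cp p hobj.
Proof.
move=> u; apply: cp_add; last exact/cpm_tr/cpm_vec.
apply: cpm_tr; apply: cpm_mul; first exact: cpm_cst.
apply: cpm_scale; last exact/cpm_adj/cpm_vec.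
apply: cp_inv; first by rewrite -unitfE -unitmxE.
exact/cp_det/cpm_vec.
Qed.

Lemma exists_min_aux : exists H, is_precond_min K X H.
Proof.
have [B hB] := K_span wsK.
have [e e0 hX] := eps_pd pX.
set C := precond_obj X 1%:M.
have [C0 _ _ _] := coerc pX e0 hX pd1 (lexx C).
set eps := e / (C + 1).
have eps0 : 0 < eps by rewrite divr_gt0 //; lra.
pose box := [set v : 'rV[R]_N | forall i, `[(- C), C]%classic (v ord0 i)].
pose S1 := [set v : 'rV[R]_N | (v <= B)%MS] `&`
   ([set v | forall i j, vec_mx v i j = vec_mx v j i] `&`
    [set v | forall x, eps * qf 1%:M x <= qf (vec_mx v) x]).
pose S := box `&` S1.
have cbox : compact box.
  by apply: (@rV_compact _ _ (fun=> `[(- C), C]%classic)) => _; exact: segment_compact.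
have cS1 : closed S1.
  apply: closedI; last apply: closedI.
  - suff -> : [set v : 'rV[R]_N | (v <= B)%MS] =
        \bigcap_(j in [set: 'I_N]) [set v | (v *m cokermx B) 0 j = 0].
      apply: closed_bigI => j _; apply: closed_eq_fun => p; last exact: cp_cst.
      by apply: cpm_mul; [move=> i k; rewrite (ord1 i); exact: cp_coord | exact: cpm_cst].
    apply/seteqP; split => v /=.
      by rewrite submxE => /eqP h j _ /=; rewrite h mxE.
    move=> h; rewrite submxE; apply/eqP/matrixP => i j.
    by move: (h j I) => /=; rewrite (ord1 i) !mxE.
  - suff -> : [set v : 'rV[R]_N | forall i j, vec_mx v i j = vec_mx v j i] =
        \bigcap_(ij in [set: 'I_d * 'I_d]) [set v | vec_mx v ij.1 ij.2 = vec_mx v ij.2 ij.1].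
      by apply: closed_bigI => ij _; apply: closed_eq_fun => p; exact: cpm_vec.
    apply/seteqP; split => v /=; first by move=> h ij _; exact: h.
    by move=> h i j; exact: (h (i, j)).
  - suff -> : [set v : 'rV[R]_N | forall x, eps * qf 1%:M x <= qf (vec_mx v) x] =
        \bigcap_(x in [set: 'cV[R]_d]) [set v | eps * qf 1%:M x <= qf (vec_mx v) x].
      apply: closed_bigI => x _; apply: closed_le_fun => p; first exact: cp_cst.
      by apply: cpm_mul; [apply: cpm_mul; [exact: cpm_cst | exact: cpm_vec] | exact: cpm_cst].
    by apply/seteqP; split => v /=; [move=> h x _; exact: h | move=> h x; exact: h].
have cS : compact S by exact: compact_closedI.
have inS H : precond_set K H -> pdmx H -> precond_obj X H <= C -> S (mxvec H).
  move=> [psH kH] pH hH; have [_ _ hE hq] := coerc pX e0 hX pH hH.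
  split.
    move=> i; case: (mxvec_indexP i) => a b; rewrite mxvecE /= in_itv /=.
    by rewrite -ler_norml; exact: hE.
  split; first exact/hB.
  split => /=; rewrite mxvecK; last exact: hq.
  by move=> i j; rewrite -{1}psH.1 mxE.
have S_pd v : S v -> pdmx (vec_mx v).
  move=> [_ [_ [hs hq]]]; split.
    by apply/matrixP => i j; rewrite mxE hs.
  move=> x xn; rewrite -/(qf _ _); apply: lt_le_trans (hq x).
  by rewrite mulr_gt0 // qf1_gt0.
have S0 : S !=set0 by exists (mxvec 1%:M); apply: inS; [exact: feas1 | exact: pd1 | exact: lexx].
have hc : {within S, continuous hobj}.
  apply: continuous_in_subspaceT => p; rewrite inE => Sp.
  exact/hobj_cont/pd_unit/S_pd.
have [c cS' cmin] := EVT_min_rV S0 cS hc.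
move: cS'; rewrite inE => Sc.
exists (vec_mx c).
have pc := S_pd c Sc.
have fc : precond_set K (vec_mx c).
  split; first exact: pd_psd.
  by rewrite hB vec_mxK; case: Sc => _ [].
split => // H' fH' pH'.
rewrite -hobjE; last exact: pd_unit.
have [hle|hgt] := lerP (precond_obj X H') C.
  have := cmin (mxvec H'); rewrite inE => /(_ (inS _ fH' pH' hle)).
  by rewrite (@hobjE (mxvec H')) mxvecK //; exact: pd_unit.
have := cmin (mxvec 1%:M); rewrite inE => /(_ (inS _ feas1 pd1 (lexx C))).
rewrite (@hobjE (mxvec 1%:M)) mxvecK; last exact: pd_unit pd1.
move=> h; apply: le_trans h _; exact: ltW.
Qed.

End Exist.

Lemma exists_min (R : realType) (d : nat) (K : set 'M[R]_d) (X : 'M[R]_d) :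
  well_structured_K K -> pdmx X -> exists H, is_precond_min K X H.
Proof. by move=> wsK pX; exact: exists_min_aux wsK pX. Qed.

Unset Implicit Arguments.
Local Close Scope classical_set_scope.
Local Open Scope ring_scope.

Theorem lemmaA6 (R : realType) (d : nat) (K : set 'M[R]_d) :
  well_structured_K K ->
  forall (X Y : 'M[R]_d) (t : R),
    pdmx X -> pdmx Y -> 0 <= t -> t <= 1 ->
    t * \tr (P_H K X) + (1 - t) * \tr (P_H K Y)
      <= \tr (P_H K (t *: X + (1 - t) *: Y)).
Proof.
move=> wsK X Y t pX pY t0 t1.
have pZ := pd_comb pX pY t0 t1.
set Z := t *: X + (1 - t) *: Y.
have mX : is_precond_min K X (P_H K X) := xgetPex 0 (@exists_min _ _ K _ wsK pX).
have mY : is_precond_min K Y (P_H K Y) := xgetPex 0 (@exists_min _ _ K _ wsK pY).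
have mZ : is_precond_min K Z (P_H K Z) := xgetPex 0 (@exists_min _ _ K _ wsK pZ).
set H := P_H K Z.
have [fH pH _] := mZ.
have [_ _ mX3] := mX; have [_ _ mY3] := mY.
have hX := mX3 _ fH pH; have hY := mY3 _ fH pH.
rewrite (min_value wsK (pd_psd pX) mX) in hX.
rewrite (min_value wsK (pd_psd pY) mY) in hY.
have := min_value wsK (pd_psd pZ) mZ; rewrite -/H /precond_obj frob_comb.
move: hX hY; rewrite /precond_obj => hX hY hZ.
nra.
Qed.
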